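(* Let $R\subset S$ be a distributive FCP ring extension with Loewy series $\{S_i\}_{i=0}^n$. Then: (1) $\pounds[R,S]=\ell[R,S]$ if and only if $[R,S]$ is a chain; in this case $[R,S]=\{S_i\}_{i=0}^n$. (2) $\pounds[R,S]=1$ if and only if $R\subset S$ is Boolean.
   Context: All rings are commutative with identity. $[R,S]$ is the lattice of $R$-subalgebras of $S$ (meet = intersection, join = product). FCP: every chain in $[R,S]$ is finite. $T\subset U$ minimal means $[T,U]=\{T,U\}$; atoms of $[R,S]$ are $T$ with $R\subset T$ minimal; the socle $\mathcal S[R,S]$ is the product of all atoms. Loewy series: $S_0=R$, $S_{i+1}=\mathcal S[S_i,S]$ while $S_i\neq S$; $\pounds[R,S]$ is the least $n$ with $S_n=S$. $\ell[R,S]$ is the supremum of lengths of chains in $[R,S]$. Distributive: $[R,S]$ is a distributive lattice; Boolean: distributive and every $T\in[R,S]$ has a complement $T'$ ($T\cap T'=R$, $TT'=S$). *)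

(* Defs.v *)
From HB Require Import structures.
From mathcomp Require Import all_boot all_algebra.
From mathcomp Require Import boolp classical_sets cardinality.
Set Implicit Arguments. Unset Strict Implicit. Unset Printing Implicit Defensive.
Import GRing.Theory.
Local Open Scope ring_scope.
Local Open Scope classical_set_scope.

Section RingExt.
Variable S : comNzRingType.

Definition is_subring (T : set S) : Prop :=
  T 1 /\ (forall x y, T x -> T y -> T (x - y)) /\ (forall x y, T x -> T y -> T (x * y)).

(* T is an element of [R,S], i.e. an R-subalgebra of S (S is the whole type) *)
Definition interm (R T : set S) : Prop := is_subring T /\ R `<=` T.

Definition gen (X : set S) : set S :=
  \bigcap_(U in [set U | is_subring U /\ X `<=` U]) U.

(* join in [R,S]: the product TU *)
Definition ring_prod (T U : set S) : set S := gen (T `|` U).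

Definition minimal_ext (T U : set S) : Prop :=
  T `<` U /\ forall V, interm T V -> V `<=` U -> V = T \/ V = U.

Definition atom (R T : set S) : Prop := interm R T /\ minimal_ext R T.

(* socle of [R,S]: product of all atoms (R if there is none) *)
Definition socle (R : set S) : set S :=
  gen (R `|` \bigcup_(T in [set T | atom R T]) T).

(* Loewy series: S_0 = R, S_{i+1} = socle [S_i, S] (stationary at S once reached) *)
Fixpoint loewy (R : set S) (i : nat) : set S :=
  match i with 0 => R | i'.+1 => socle (loewy R i') end.

Definition loewy_length (R : set S) (n : nat) : Prop :=
  loewy R n = setT /\ forall m, loewy R m = setT -> (n <= m)%N.

Definition has_chain_of_length (R : set S) (k : nat) : Prop :=
  exists f : nat -> set S, (forall i, (i <= k)%N -> interm R (f i)) /\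
                           (forall i, (i < k)%N -> f i `<` f i.+1).

Definition lattice_length (R : set S) (l : nat) : Prop :=
  has_chain_of_length R l /\ forall k, has_chain_of_length R k -> (k <= l)%N.

Definition FCP (R : set S) : Prop :=
  forall C : set (set S), C `<=` interm R ->
    (forall A B, C A -> C B -> A `<=` B \/ B `<=` A) -> finite_set C.

Definition is_chain_lattice (R : set S) : Prop :=
  forall T U, interm R T -> interm R U -> T `<=` U \/ U `<=` T.

(* [R,S] distributive (meet = intersection, join = product) *)
Definition distributive_ext (R : set S) : Prop :=
  forall T U V, interm R T -> interm R U -> interm R V ->
    T `&` ring_prod U V = ring_prod (T `&` U) (T `&` V).

Definition boolean_ext (R : set S) : Prop :=
  distributive_ext R /\
  forall T, interm R T -> exists T', interm R T' /\ T `&` T' = R /\ ring_prod T T' = setT.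

End RingExt.

(* Main.v *)
Require Import Defs.
From HB Require Import structures.
From mathcomp Require Import all_boot all_algebra.
From mathcomp Require Import boolp classical_sets cardinality.
Local Open Scope classical_set_scope.

Section Helpers.
Local Open Scope ring_scope.
Variable S : comNzRingType.
Implicit Types (A B T U V X R : set S).

Lemma seteq A B : A `<=` B -> B `<=` A -> A = B.
Proof. by move=> h1 h2; rewrite eqEsubset; split. Qed.

Lemma gen_sub X U : is_subring U -> X `<=` U -> gen X `<=` U.
Proof. by move=> HU HXU x Hx; apply: Hx; split. Qed.

Lemma sub_gen X : X `<=` gen X.
Proof. by move=> x Xx U [_ XU]; exact: XU. Qed.

Lemma gen_subring X : is_subring (gen X).
Proof.
split; [|split].
- by move=> U [[U1 _] _].
- move=> x y gx gy U HU; case: (HU) => [[_ [Hm _]] _]; apply: Hm; [exact: gx|exact: gy].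
- move=> x y gx gy U HU; case: (HU) => [[_ [_ Hm]] _]; apply: Hm; [exact: gx|exact: gy].
Qed.

Lemma gen_id X : is_subring X -> gen X = X.
Proof. by move=> HX; apply: seteq; [exact: gen_sub | exact: sub_gen]. Qed.

Lemma subringI A B : is_subring A -> is_subring B -> is_subring (A `&` B).
Proof.
move=> [A1 [AB AM]] [B1 [BB BM]]; split; [|split].
- by split.
- by move=> x y [? ?] [? ?]; split; [apply: AB|apply: BB].
- by move=> x y [? ?] [? ?]; split; [apply: AM|apply: BM].
Qed.

Lemma interm_trans R B V : interm R B -> interm B V -> interm R V.
Proof. by move=> [_ RB] [HV BV]; split => // x /RB /BV. Qed.

Lemma socle_sub B : B `<=` socle B.
Proof. by move=> x Bx; apply: sub_gen; left. Qed.

Lemma atom_sub_socle B a : atom B a -> a `<=` socle B.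
Proof. by move=> Ha x ax; apply: sub_gen; right; exists a. Qed.

Lemma socle_least B U : is_subring U -> B `<=` U ->
  (forall a, atom B a -> a `<=` U) -> socle B `<=` U.
Proof.
move=> HU BU Ha; apply: gen_sub => // x [Bx|[a Hat ax]]; first exact: BU.
exact: (Ha a Hat).
Qed.

Lemma loewy_interm R i : is_subring R -> interm R (loewy R i).
Proof.
move=> HR; elim: i => [|i [_ IH]] /=; first by split.
split; first exact: gen_subring.
by move=> x /IH /socle_sub.
Qed.

Lemma loewy_mono R i j : (i <= j)%N -> loewy R i `<=` loewy R j.
Proof.
elim: j => [|j IH]; first by rewrite leqn0 => /eqP ->.
rewrite leq_eqVlt => /orP [/eqP -> //|]; rewrite ltnS => /IH H x /H.
exact: socle_sub.
Qed.

Lemma loewy_stat R i j : loewy R i = loewy R i.+1 -> (i <= j)%N ->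
  loewy R j = loewy R i.
Proof.
move=> E; elim: j => [|j IH]; first by rewrite leqn0 => /eqP ->.
rewrite leq_eqVlt => /orP [/eqP <- //|]; rewrite ltnS => /IH /= ->.
by symmetry; exact: E.
Qed.

Lemma max_elt R l (Q : set S -> Prop) : lattice_length R l ->
  (forall V, Q V -> interm R V) -> forall V0, Q V0 ->
  exists V, Q V /\ forall V', Q V' -> V `<=` V' -> V' = V.
Proof.
move=> [_ Hl] HQ V0 QV0; apply: contrapT => Hno.
have P : forall k, exists f : nat -> set S,
   (forall i, (i <= k)%N -> interm R (f i)) /\
   (forall i, (i < k)%N -> f i `<` f i.+1) /\ Q (f k).
  elim=> [|k [f [Hi [Hs Hq]]]].
    by exists (fun _ => V0); split => // i _; exact: HQ.
  have [V' [HQ' [Hsub Hne]]] : exists V', Q V' /\ f k `<=` V' /\ V' <> f k.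
    apply: contrapT => H; apply: Hno; exists (f k); split => // V' HQ' Hs'.
    by apply: contrapT => Hne; apply: H; exists V'.
  exists (fun i => if (i <= k)%N then f i else V'); split; [|split].
  - move=> i _; case: ifP => Hik; [exact: Hi|exact: HQ].
  - move=> i; rewrite ltnS => Hik; rewrite Hik.
    case: ifP => Hik1; first by apply: Hs.
    have -> : i = k by apply/eqP; rewrite eqn_leq Hik leqNgt Hik1.
    by split => // H; apply: Hne; apply: seteq.
  - by rewrite ltnn.
have [f [Hi [Hs _]]] := P l.+1.
by have := Hl l.+1 (ex_intro _ f (conj Hi Hs)); rewrite ltnn.
Qed.

Lemma min_elt R l (Q : set S -> Prop) : lattice_length R l ->
  (forall V, Q V -> interm R V) -> forall V0, Q V0 ->
  exists V, Q V /\ forall V', Q V' -> V' `<=` V -> V' = V.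
Proof.
move=> [_ Hl] HQ V0 QV0; apply: contrapT => Hno.
have P : forall k, exists f : nat -> set S,
   (forall i, (i <= k)%N -> interm R (f i)) /\
   (forall i, (i < k)%N -> f i `<` f i.+1) /\ Q (f 0%N).
  elim=> [|k [f [Hi [Hs Hq]]]].
    by exists (fun _ => V0); split => // i _; exact: HQ.
  have [V' [HQ' [Hsub Hne]]] : exists V', Q V' /\ V' `<=` f 0%N /\ V' <> f 0%N.
    apply: contrapT => H; apply: Hno; exists (f 0%N); split => // V' HQ' Hs'.
    by apply: contrapT => Hne; apply: H; exists V'.
  exists (fun i => if i is i'.+1 then f i' else V'); split; [|split] => //.
  - by case=> [_|i]; [exact: HQ|exact: Hi].
  - case=> [_|i Hik]; last exact: Hs.
    by split => // H; apply: Hne; apply: seteq.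
have [f [Hi [Hs _]]] := P l.+1.
by have := Hl l.+1 (ex_intro _ f (conj Hi Hs)); rewrite ltnn.
Qed.

Lemma atom_exists R l B T : lattice_length R l -> interm R B -> is_subring T ->
  B `<` T -> exists a, atom B a /\ a `<=` T.
Proof.
move=> Hl HB HT BT.
have [V [[HV [BV VT]] Hmin]] := @min_elt R l (fun V => interm R V /\ B `<` V /\ V `<=` T) Hl
   (fun V H => H.1) T (conj (interm_trans _ _ _ HB (conj HT BT.1)) (conj BT (fun x (h : T x) => h))).
exists V; split => //; split; first by split; [exact: HV.1|exact: BV.1].
split => // W HW WV.
have [->|Hne] := pselect (W = B); first by left.
right; apply: Hmin => //; split; first exact: interm_trans _ _ _ HB HW.
split.
  split; first exact: HW.2.
  by move=> H; apply: Hne; apply: seteq => //; exact: HW.2.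
by move=> x /WV /VT.
Qed.


Lemma loewy_F3 R n i : loewy_length R n -> (n <= i)%N -> loewy R i = setT.
Proof.
move=> [Hn _] Hi; apply: seteq => // x _.
by apply: (loewy_mono R n i Hi); rewrite Hn.
Qed.

Lemma loewy_F1 R n i : loewy_length R n -> (i < n)%N -> loewy R i `<` loewy R i.+1.
Proof.
move=> Hn Hi; split; first exact: socle_sub.
move=> H; have E : loewy R i = loewy R i.+1 by apply: seteq => //; exact: socle_sub.
have := loewy_stat R i n E (ltnW Hi); rewrite Hn.1 => E2.
have := Hn.2 i (esym E2); by rewrite leqNgt Hi.
Qed.

Lemma loewy_chain R n : is_subring R -> loewy_length R n ->
  has_chain_of_length R n.
Proof.
move=> HR Hn; exists (loewy R); split => i Hi; first exact: loewy_interm.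
exact: loewy_F1 R n i Hn Hi.
Qed.

Lemma every_loewy R n : is_subring R -> loewy_length R n ->
  (forall i T, interm R T -> loewy R i `<` T -> loewy R i.+1 `<=` T) ->
  forall T, interm R T -> exists2 i, (i <= n)%N & T = loewy R i.
Proof.
move=> HR Hn Hstep T HT.
have P : forall i, loewy R i `<=` T \/ exists2 j, (j < i)%N & T = loewy R j.
  elim=> [|i [Hi|[j Hj E]]]; first by left; exact: HT.2.
  - have [E|Hne] := pselect (T = loewy R i); first by right; exists i.
    left; apply: Hstep => //; split => // H; apply: Hne; exact: seteq.
  - by right; exists j => //; exact: ltnW.
case: (P n) => [H|[j Hj E]]; last by exists j => //; exact: ltnW.
exists n => //; apply: seteq => //; by rewrite Hn.1.
Qed.
End Helpers.
Arguments seteq {S}.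
Arguments gen_sub {S}.
Arguments sub_gen {S}.
Arguments gen_subring {S}.
Arguments gen_id {S}.
Arguments subringI {S}.
Arguments interm_trans {S}.
Arguments socle_sub {S}.
Arguments atom_sub_socle {S}.
Arguments socle_least {S}.
Arguments loewy_interm {S}.
Arguments loewy_mono {S}.
Arguments loewy_stat {S}.
Arguments max_elt {S}.
Arguments min_elt {S}.
Arguments atom_exists {S}.
Arguments loewy_F3 {S}.
Arguments loewy_F1 {S}.
Arguments loewy_chain {S}.
Arguments every_loewy {S}.

Theorem corollary8p31 (S : comNzRingType) (R : set S) (n l : nat) :
  is_subring R -> R `<` [set: S] ->
  distributive_ext R -> FCP R ->
  loewy_length R n -> lattice_length R l ->
  ((n = l <-> is_chain_lattice R) /\
   (is_chain_lattice R -> forall T, interm R T <-> exists2 i, (i <= n)%N & T = loewy R i)) /\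
  (n = 1%N <-> boolean_ext R).
Proof.
move=> HR [_ HRS] Hdist _ Hn Hl.
have Hint : forall i, interm R (loewy R i) := fun i => loewy_interm R i HR.
have Hnl : (n <= l)%N := Hl.2 n (loewy_chain R n HR Hn).
have chain_step : is_chain_lattice R -> forall i T, interm R T ->
    loewy R i `<` T -> loewy R i.+1 `<=` T.
  move=> Hc i T HT [LT NTL]; apply: socle_least; [exact: HT.1|exact: LT|].
  move=> a [[Ha1 Ha2] [Hap Hmin]].
  have HaR : interm R a := interm_trans _ _ _ (Hint i) (conj Ha1 Ha2).
  case: (Hc _ _ HaR HT) => // Ta.
  case: (Hmin T (conj HT.1 LT) Ta) => E; first by exfalso; apply: NTL; rewrite E.
  by rewrite E.
have chain_all : is_chain_lattice R -> forall T, interm R T ->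
    exists2 i, (i <= n)%N & T = loewy R i :=
  fun Hc => every_loewy R n HR Hn (chain_step Hc).
split; [split; [split|] |].
- move=> Enl.
  have step : forall i T, interm R T -> loewy R i `<` T -> loewy R i.+1 `<=` T.
    move=> i T HT LT.
    have Hin : (i < n)%N.
      rewrite ltnNge; apply/negP => Hni; case: LT => _; apply.
      by rewrite (loewy_F3 R n i Hn Hni).
    have [a [Ha aT]] := atom_exists R l (loewy R i) T Hl (Hint i) HT.1 LT.
    suff -> : loewy R i.+1 = a by [].
    apply: seteq; last exact: atom_sub_socle.
    apply: contrapT => Hna.
    pose g j := if (j <= i)%N then loewy R j else if j == i.+1 then a else loewy R j.-1.
    have : (n.+1 <= l)%N.
      apply: Hl.2; exists g; split.
      + move=> j _; rewrite /g; case: ifP => _; first exact: Hint.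
        case: ifP => _; last exact: Hint.
        exact: interm_trans _ _ _ (Hint i) Ha.1.
      + move=> j Hj; rewrite /g.
        case: (ltngtP j i) => Hji.
        * rewrite /= ?Hji ?(ltnW Hji).
          exact: loewy_F1 R n j Hn (ltn_trans Hji Hin).
        * have h1 : (j <= i)%N = false by rewrite leqNgt Hji.
          have h2 : (j.+1 <= i)%N = false by rewrite leqNgt ltnS (ltnW Hji).
          rewrite ?h1 ?h2; case: (eqVneq j i.+1) => [->|Hne].
            rewrite ?eqxx eqn_leq ltnn /=.
            by split; [exact: atom_sub_socle|].
          rewrite eqSS (gtn_eqF Hji) /=.
          have Hj0 : j = j.-1.+1 by rewrite prednK // (leq_ltn_trans (leq0n i) Hji).
          rewrite {2}Hj0; apply: loewy_F1 Hn _.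
          by rewrite -Hj0 -ltnS.
        * rewrite ?Hji ?leqnn ?ltnn ?eqxx /=.
          exact: Ha.2.1.
    by rewrite Enl ltnn.
  move=> T U HT HU.
  have [i _ ->] := every_loewy R n HR Hn step T HT.
  have [j _ ->] := every_loewy R n HR Hn step U HU.
  by case/orP: (leq_total i j) => h; [left|right]; apply: loewy_mono.
- move=> Hc; apply/eqP; rewrite eqn_leq Hnl /=.
  have [[f [Hfi Hfs]] _] := Hl.
  have P : forall j, (j <= l)%N -> exists i, (j <= i <= n)%N /\ f j = loewy R i.
    elim=> [_|j IH Hj].
      have [i Hi E] := chain_all Hc (f 0%N) (Hfi 0%N (leq0n _)).
      by exists i; rewrite Hi.
    have [i [/andP [Hji Hin] E]] := IH (ltnW Hj).
    have [i' Hi' E'] := chain_all Hc (f j.+1) (Hfi _ Hj).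
    exists i'; rewrite Hi' andbT; split => //.
    have Hii : (i < i')%N.
      rewrite ltnNge; apply/negP => H.
      have := Hfs j Hj; rewrite E E' => -[_ H2]; apply: H2.
      exact: loewy_mono.
    exact: leq_ltn_trans Hji Hii.
  have [i [/andP [Hli Hin] _]] := P l (leqnn l).
  exact: leq_trans Hli Hin.
- move=> Hc T; split; first exact: chain_all Hc T.
  by move=> [i _ ->]; exact: Hint.
have L1 : loewy R 1 = setT -> n = 1%N.
  move=> E; apply/eqP; rewrite eqn_leq (Hn.2 1%N E) /= lt0n; apply/eqP => n0.
  apply: HRS; have := Hn.1; rewrite n0 /= => E0.
  by rewrite -E0 => x.
split.
- move=> n1.
  have E1 : socle R = setT by have := Hn.1; rewrite n1.
  split => // T HT.
  have TR : T `&` R = R.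
    by apply: seteq; [move=> x []| move=> x Rx; split => //; exact: HT.2].
  have [V [[HV TV] Vmax]] := @max_elt S R l (fun V => interm R V /\ T `&` V = R) Hl
     (fun V H => H.1) R (conj (conj HR (fun x (h : R x) => h)) TR).
  exists V; split => //; split => //.
  apply: seteq => //; rewrite -E1.
  apply: socle_least; first exact: gen_subring.
    by move=> x Rx; apply: sub_gen; left; exact: HT.2.
  move=> a Ha; apply: contrapT => Hna.
  have HaR : interm R a := Ha.1.
  have HV' : interm R (ring_prod V a).
    split; first exact: gen_subring.
    by move=> x Rx; apply: sub_gen; left; exact: HV.2.
  have HW : interm R (T `&` a).
    split; first exact: subringI HT.1 HaR.1.
    by move=> x Rx; split; [exact: HT.2|exact: HaR.2].
  have Ta : T `&` a = R.
    case: Ha => _ [_ Hmin].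
    case: (Hmin (T `&` a) HW (fun x => @proj2 _ _)) => // E.
    exfalso; apply: Hna => x ax; apply: sub_gen; left.
    have : (T `&` a) x by rewrite E.
    by case.
  have QV' : T `&` ring_prod V a = R.
    by rewrite (Hdist T V a HT HV HaR) TV Ta /ring_prod setUid gen_id.
  have E := Vmax (ring_prod V a) (conj HV' QV') (fun x Vx => sub_gen _ _ (or_introl Vx)).
  apply: Hna => x ax; apply: sub_gen; right.
  rewrite -E; apply: sub_gen; right; exact: ax.
- move=> [_ Hcomp]; apply: L1.
  have HM : interm R (socle R) := Hint 1%N.
  have [M' [HM' [I1 P1]]] := Hcomp _ HM.
  have EM' : M' = R.
    apply: contrapT => Hne.
    have [a [Ha aM']] := atom_exists R l R M' Hl (conj HR (fun x h => h)) HM'.1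
       (conj HM'.2 (fun H => Hne (seteq _ _ H HM'.2))).
    have Ha' := Ha.
    case: Ha => _ [[_ Hna] _]; apply: Hna => x ax.
    rewrite -I1; split; [exact: atom_sub_socle Ha' x ax|exact: aM'].
  move: P1; rewrite EM' /ring_prod (setUidl (socle_sub R)) gen_id //.
  exact: gen_subring.
Qed.
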